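(* Let $C$ be a monotone normalized cost function and let $H:2^{M_1}\times\cdots\times2^{M_n}\to\mathbb{R}_{\ge0}\cup\{\infty\}$ be normalized ($H(\vec\emptyset)=0$) and monotone. Let $\mathcal A$ be the VCG-based mechanism with function $H$, defined on a valuation domain that contains all additive valuations, and suppose that $\mathcal A$ always covers the cost on this domain. Then $H(\vec S)\ge P_C(\vec S)$ for every allocation $\vec S$.
   Context: Setting. $N=\{1,\dots,n\}$ is a set of players and $M_1,\dots,M_n$ are pairwise disjoint finite sets; $M=\bigcup_i M_i$. An allocation is a vector $\vec S=(S_1,\dots,S_n)$ with $S_i\subseteq M_i$, identified with $\bigcup_iS_i\subseteq M$; $\vec\emptyset=(\emptyset,\dots,\emptyset)$. A cost function is a monotone $C:2^M\to\mathbb{R}_{\ge0}$ with $C(\emptyset)=0$; valuations $v_i:2^{M_i}\to\mathbb R_{\ge0}$ are monotone with $v_i(\emptyset)=0$; $v_i$ is additive if $v_i(S)=\sum_{j\in S}v_i(\{j\})$. The potential function is $P_C(\vec S)=\sum_{\emptyset\neq I\subseteq N}\frac{C(\bigcup_{i\in I}S_i)}{|I|\binom{n}{|I|}}$. The VCG-based mechanism with $H$ outputs $\overrightarrow{ALG}\in\arg\max_{\vec S}\sum_iv_i(S_i)-H(\vec S)$ (some tie-breaking), for each $i$ computes $\overrightarrow{ALG^{-i}}$ maximizing the same objective over allocations with $i$-th component $\emptyset$, and charges $p_i=\left[\sum_jv_j(ALG^{-i}_j)-H(\overrightarrow{ALG^{-i}})\right]-\left[\sum_{j\ne i}v_j(ALG_j)-H(\overrightarrow{ALG})\right]$.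 It always covers the cost if $\sum_ip_i\ge C(\overrightarrow{ALG})$ for every profile in the domain. *)

(* Defs.v *)
From HB Require Import structures.
From mathcomp Require Import all_boot all_order all_algebra.
Set Implicit Arguments. Unset Strict Implicit. Unset Printing Implicit Defensive.
Import Order.TTheory GRing.Theory Num.Theory.
Local Open Scope ring_scope.

(* Items M form a finite type; [own x] is the player owning item x, so
   M_i = part own i, and the M_i are pairwise disjoint with union M.
   An allocation (S_1,...,S_n) is identified with S = \bigcup_i S_i : {set M},
   S_i = S :&: part own i. *)
Definition part (n : nat) (M : finType) (own : M -> 'I_n) (i : 'I_n) : {set M} :=
  [set x | own x == i].

(* Extended nonnegative reals R_{>=0} \cup {oo}: None stands for oo. *)
Definition ext_le (R : realFieldType) (a b : option R) : Prop :=
  match a, b with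
  | _, None => True
  | None, Some _ => False
  | Some x, Some y => x <= y
  end.

(* A valuation profile: v i is player i's valuation; only its values on
   subsets of M_i are ever used. *)
Definition profile (R : realFieldType) (n : nat) (M : finType) :=
  'I_n -> {set M} -> R.

Definition valid_profile (R : realFieldType) n (M : finType) (own : M -> 'I_n)
  (v : profile R n M) : Prop :=
  forall i, v i set0 = 0 /\
    (forall S T : {set M}, S \subset T -> T \subset part own i -> v i S <= v i T) /\
    (forall S : {set M}, S \subset part own i -> 0 <= v i S).

Definition additive_profile (R : realFieldType) n (M : finType) (own : M -> 'I_n)
  (v : profile R n M) : Prop :=
  forall i (S : {set M}), S \subset part own i -> v i S = \sum_(j in S) v i [set j].

Definition welfare (R : realFieldType) n (M : finType) (own : M -> 'I_n)
  (v : profile R n M) (S : {set M}) : R :=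
  \sum_(i < n) v i (S :&: part own i).

Definition welfare_but (R : realFieldType) n (M : finType) (own : M -> 'I_n)
  (v : profile R n M) (i : 'I_n) (S : {set M}) : R :=
  \sum_(j < n | j != i) v j (S :&: part own j).

(* S maximizes sum_i v_i(S_i) - H(S) among allocations satisfying F
   (with H(S) finite, as the value -oo is never maximal since H(empty)=0). *)
Definition is_opt (R : realFieldType) n (M : finType) (own : M -> 'I_n)
  (H : {set M} -> option R) (v : profile R n M) (F : {set M} -> Prop)
  (S : {set M}) : Prop :=
  F S /\ exists h, H S = Some h /\
    forall T h', F T -> H T = Some h' ->
      welfare own v T - h' <= welfare own v S - h.

Definition Hval (R : realFieldType) (M : finType) (H : {set M} -> option R)
  (S : {set M}) : R := odflt 0 (H S).

(* VCG payment of player i, given ALG = A and ALG^{-i} = Ai. *)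
Definition vcg_payment (R : realFieldType) n (M : finType) (own : M -> 'I_n)
  (H : {set M} -> option R) (v : profile R n M) (i : 'I_n) (A Ai : {set M}) : R :=
  (welfare own v Ai - Hval H Ai) - (welfare_but own v i A - Hval H A).

Definition potential (R : realFieldType) n (M : finType) (own : M -> 'I_n)
  (C : {set M} -> R) (S : {set M}) : R :=
  \sum_(I : {set 'I_n} | I != set0)
     C (\bigcup_(i in I) (S :&: part own i)) / (#|I|%:R * ('C(n, #|I|))%:R).

(* Main.v *)
Require Import Defs.
From HB Require Import structures.
From mathcomp Require Import all_boot all_order all_algebra.
From mathcomp Require Import ring lra zify.
Import Order.TTheory GRing.Theory Num.Theory.
Local Open Scope ring_scope.

Definition cw (R : realFieldType) (n m : nat) : R := (m%:R * ('C(n, m))%:R)^-1.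

Lemma bigcup_partE n (M : finType) (own : M -> 'I_n) (S : {set M}) (I : {set 'I_n}) :
  \bigcup_(i in I) (S :&: part own i) = S :&: [set x | own x \in I].
Proof.
apply/setP=> x; rewrite !inE; apply/bigcupP/andP.
  by case=> i iI; rewrite !inE => /andP[xS /eqP oi]; rewrite xS oi.
by case=> xS xI; exists (own x) => //; rewrite !inE xS eqxx.
Qed.

Lemma potE (R : realFieldType) n (M : finType) (own : M -> 'I_n) (C : {set M} -> R)
  (HC0 : C set0 = 0) (S : {set M}) :
  potential own C S = \sum_(I : {set 'I_n}) C (S :&: [set x | own x \in I]) * cw R n #|I|.
Proof.
rewrite /potential [in RHS](bigD1 set0) //=.
have -> : S :&: [set x | own x \in (set0 : {set 'I_n})] = set0.
  by apply/setP=> x; rewrite !inE andbF.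
rewrite HC0 mul0r add0r; apply: eq_bigr => I _.
by rewrite bigcup_partE /cw.
Qed.
Lemma setD1_notin (T : finType) (a : T) (A : {set T}) : a \notin A -> A :\ a = A.
Proof. by move=> aA; apply/setP=> x; rewrite !inE; case: eqP => // ->; rewrite (negbTE aA). Qed.

Lemma step1 (R : realFieldType) n (i : 'I_n) (f : {set 'I_n} -> R) (c : nat -> R) :
  \sum_(I : {set 'I_n}) f (I :\ i) * c #|I| =
  \sum_(I : {set 'I_n} | i \notin I) f I * (c #|I| + c #|I|.+1).
Proof.
rewrite (bigID (fun I : {set 'I_n} => i \in I)) /=.
rewrite (reindex_onto (fun J => i |: J) (fun I => I :\ i)) /=; last first.
  by move=> I iI; rewrite setD1K.
rewrite [RHS](eq_bigr (fun I => f I * c #|I| + f I * c #|I|.+1)); last first.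
  by move=> I _; rewrite mulrDr.
rewrite big_split /= addrC; congr (_ + _).
  by apply: eq_bigr => I iI; rewrite setD1_notin.
apply: eq_big => [J|J].
  rewrite setU11 /=; case iJ: (i \in J) => /=.
    apply/negbTE/eqP => E; have : i \notin (i |: J) :\ i by rewrite !inE eqxx.
    by rewrite E iJ.
  by rewrite setU1K ?iJ // eqxx.
move=> /andP[_ /eqP E]; rewrite E cardsU1.
have iJ : i \notin J by rewrite -E !inE eqxx.
by rewrite iJ add1n.
Qed.

Lemma step2 (R : realFieldType) n (G : {set 'I_n} -> R) :
  \sum_(i < n) \sum_(I : {set 'I_n} | i \notin I) G I =
  \sum_(I : {set 'I_n}) G I *+ (n - #|I|).
Proof.
under eq_bigr do rewrite big_mkcond.
rewrite exchange_big /=; apply: eq_bigr => I _.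
rewrite -big_mkcond /=.
rewrite (eq_bigl (mem (~: I))); last by move=> i; rewrite !inE.
rewrite sumr_const; congr (_ *+ _).
have E := cardsC I; rewrite card_ord in E.
apply: (@addnI #|I|); rewrite E subnKC //.
by have := max_card (mem I); rewrite card_ord.
Qed.

Lemma coef_id (R : realFieldType) n m : (0 < m)%N -> (m < n)%N ->
  n%:R * cw R n m = (n - m)%:R * (cw R n m + cw R n m.+1).
Proof.
move=> m0 mn.
have hb : 'C(n, m.+1)%:R = ((n - m)%:R * 'C(n, m)%:R) / (m.+1)%:R :> R.
  rewrite -natrM -mul_bin_left natrM mulrAC mulfV ?mul1r //.
  by rewrite pnatr_eq0.
rewrite /cw hb natrB ?(ltnW mn) //.
have h1 : (m%:R : R) != 0 by rewrite pnatr_eq0 -lt0n.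
have h2 : ('C(n, m)%:R : R) != 0 by rewrite pnatr_eq0 -lt0n bin_gt0 ltnW.
have h3 : (n%:R - m%:R : R) != 0 by rewrite subr_eq0 eqr_nat neq_ltn mn orbT.
have h4 : ((m.+1)%:R : R) != 0 by rewrite pnatr_eq0.
field.
by rewrite nat1r h1 h2 h3 h4.
Qed.

Lemma pot_rec (R : realFieldType) n (M : finType) (own : M -> 'I_n) (C : {set M} -> R)
  (HC0 : C set0 = 0) (S : {set M}) : (0 < n)%N ->
  potential own C S *+ n = C S + \sum_(i < n) potential own C (S :\: part own i).
Proof.
move=> n0.
set f := fun I : {set 'I_n} => C (S :&: [set x | own x \in I]).
have E1 : forall i, potential own C (S :\: part own i) =
    \sum_(I : {set 'I_n}) f (I :\ i) * cw R n #|I|.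
  move=> i; rewrite potE //; apply: eq_bigr => I _; rewrite /f; congr (C _ * _).
  apply/setP => x; rewrite !inE.
  by case: (own x == i); case: (x \in S); case: (own x \in I).
rewrite (eq_bigr (fun i => \sum_(I : {set 'I_n} | i \notin I) f I * (cw R n #|I| + cw R n #|I|.+1))); last first.
  by move=> i _; rewrite E1 step1.
rewrite step2 potE // -sumrMnl.
have CS : C S = f setT by rewrite /f; congr C; apply/setP=> x; rewrite !inE andbT.
rewrite CS (bigD1 setT) //= [in RHS](bigD1 setT) //= !cardsT card_ord subnn mulr0n add0r; congr (_ + _).
  rewrite /cw binn -mulrnAr -mulr_natl mulr1 divff ?mulr1 //.
  by rewrite pnatr_eq0 -lt0n.
apply: eq_bigr => I IT.
have [->|I0] := eqVneq I set0.
  have E0 : S :&: [set x | own x \in (set0 : {set 'I_n})] = set0.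
    by apply/setP=> x; rewrite !inE andbF.
  by rewrite /f E0 HC0 !mul0r !mul0rn.
have m0 : (0 < #|I|)%N by rewrite card_gt0.
have mn : (#|I| < n)%N.
  rewrite ltn_neqAle; have := max_card (mem I); rewrite card_ord => ->; rewrite andbT.
  apply: contra IT => /eqP E; rewrite eqEcard subsetT /= cardsT E card_ord.
  done.
rewrite -!mulrnAr; congr (_ * _).
by rewrite -mulr_natl -[RHS]mulr_natl coef_id.
Qed.

Lemma keyopt (R : realFieldType) (M : finType) (H : {set M} -> option R)
  (HHnn : forall (S : {set M}) h, H S = Some h -> 0 <= h)
  (HHmono : forall S T : {set M}, S \subset T -> ext_le (H S) (H T))
  (S U T : {set M}) (h u a : R) :
  U \subset S -> T :&: S \subset U -> H U = Some u -> u <= h -> H T = Some a ->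
  (h + 1) * #|U|%:R - u <= (h + 1) * #|T :&: S|%:R - a -> T :&: S = U /\ a = u.
Proof.
move=> US TSU HU uh HT ineq.
have a0 := HHnn _ _ HT; have u0 := HHnn _ _ HU.
have TU : U \subset T.
  apply/contraT => nUT; suff : False by [].
  have pr : T :&: S \proper U.
    rewrite properEneq TSU andbT; apply/eqP => E.
    by move: nUT; rewrite -E subsetIl.
  have := proper_card pr; rewrite -(ler_nat R) -natr1 => lt.
  have h0 : 0 <= h + 1 by lra.
  set x := (#|T :&: S|%:R : R) in ineq lt; set y := (#|U|%:R : R) in ineq lt.
  have : 0 <= (h + 1) * (y - x - 1) by apply: mulr_ge0 => //; lra.
  nra.
have E : T :&: S = U by apply/eqP; rewrite eqEsubset TSU /= subsetI TU US.
split=> //.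
have := HHmono _ _ TU; rewrite HU HT /= => ua.
rewrite E in ineq; lra.
Qed.

Lemma mech_bound (R : realFieldType) (n : nat) (M : finType) (own : M -> 'I_n)
  (C : {set M} -> R) (H : {set M} -> option R)
  (HCmono : forall S T : {set M}, S \subset T -> C S <= C T)
  (HHnn : forall (S : {set M}) h, H S = Some h -> 0 <= h)
  (HHmono : forall S T : {set M}, S \subset T -> ext_le (H S) (H T))
  (D : profile R n M -> Prop)
  (HDadd : forall v, valid_profile own v -> additive_profile own v -> D v)
  (alg : profile R n M -> {set M})
  (alg_minus : profile R n M -> 'I_n -> {set M})
  (Halg : forall v, D v -> is_opt own H v (fun _ => True) (alg v))
  (Halg_minus : forall v i, D v ->
     is_opt own H v (fun T => T :&: part own i = set0) (alg_minus v i))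
  (Hcover : forall v, D v ->
     C (alg v) <= \sum_(i < n) vcg_payment own H v i (alg v) (alg_minus v i))
  (S : {set M}) (h : R) (HS : H S = Some h) :
  C S <= \sum_(i < n) (h - Hval H (S :\: part own i)).
Proof.
have h0 := HHnn _ _ HS.
pose L : R := h + 1.
pose w := fun x : M => L * (x \in S)%:R.
pose v : profile R n M := fun _ T => \sum_(x in T) w x.
have wE : forall T : {set M}, \sum_(x in T) w x = L * #|T :&: S|%:R.
  move=> T; rewrite /w -mulr_sumr; congr (_ * _).
  rewrite -sum1_card natr_sum big_mkcond [RHS]big_mkcond /=.
  by apply: eq_bigr => x _; rewrite !inE; case: (x \in T); case: (x \in S).
have vE : forall i T, v i T = L * #|T :&: S|%:R by move=> i T; apply: wE.
have vv : valid_profile own v.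
  move=> i; split; [|split].
  - by rewrite vE set0I cards0 mulr0.
  - move=> A B AB _; rewrite !vE; apply: ler_wpM2l; first by rewrite /L; lra.
    by rewrite ler_nat subset_leq_card // setSI.
  - move=> A _; rewrite vE; apply: mulr_ge0; first by rewrite /L; lra.
    by rewrite ler0n.
have va : additive_profile own v.
  by move=> i T _; rewrite /v; apply: eq_bigr => x _; rewrite big_set1.
have Dv := HDadd v vv va.
have wel : forall T, welfare own v T = L * #|T :&: S|%:R.
  move=> T; rewrite -wE (partition_big own predT) //=.
  by apply: eq_bigr => j _; apply: eq_bigl => x; rewrite !inE.
have [_ [a [Ha opt]]] := Halg v Dv.
set A := alg v in Ha opt *.
have [AS ah] : A :&: S = S /\ a = h.
  apply: (@keyopt _ _ _ HHnn HHmono _ _ _ _ _ _ (subxx S) (subsetIr A S) HS (lexx h) Ha).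
  by have := opt S h I HS; rewrite !wel setIid.
have SA : S \subset A by rewrite -AS subsetIl.
apply: (le_trans (HCmono _ _ SA)); apply: (le_trans (Hcover v Dv)).
rewrite le_eqVlt; apply/orP; left; apply/eqP; apply: eq_bigr => i _.
set U := S :\: part own i.
have US : U \subset S by apply: subsetDl.
have [ui HU] : exists ui, H U = Some ui.
  by have := HHmono _ _ US; rewrite HS; case: (H U) => [ui|] // _; exists ui.
have uih : ui <= h by have := HHmono _ _ US; rewrite HS HU.
have feasU : U :&: part own i = set0.
  by apply/setP => x; rewrite !inE; case: (own x == i); rewrite ?andbF.
have [Ai0 [ai [Hai opti]]] := Halg_minus v i Dv.
set Ai := alg_minus v i in Ai0 Hai opti *.
have AiSU : Ai :&: S \subset U.
  apply/subsetP => x; rewrite !inE => /andP[xA xS]; rewrite xS andbT.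
  apply/negP => /eqP oi.
  have : x \in Ai :&: part own i by rewrite !inE xA oi eqxx.
  by rewrite Ai0 inE.
have [AiS aiu] : Ai :&: S = U /\ ai = ui.
  apply: (@keyopt _ _ _ HHnn HHmono _ _ _ _ _ _ US AiSU HU uih Hai).
  by have := opti U ui feasU HU; rewrite !wel (setIidPl US).
have wb : welfare_but own v i A = welfare own v (A :\: part own i).
  rewrite /welfare_but /welfare [RHS](bigD1 i) //=.
  have -> : (A :\: part own i) :&: part own i = set0.
    by apply/setP => x; rewrite !inE; case: (own x == i); rewrite ?andbF.
  rewrite vE set0I cards0 mulr0 add0r; apply: eq_bigr => j ji.
  congr (v j _); apply/setP => x; rewrite !inE.
  case E: (own x == j); rewrite ?andbF ?andbT //.
  by rewrite (eqP E) ji.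
have AU : (A :\: part own i) :&: S = U.
  apply/setP => x; rewrite !inE.
  have SA' := SA; move/subsetP: SA' => /(_ x) SAx.
  case xS: (x \in S); rewrite ?andbT ?andbF //.
  by rewrite SAx // andbT.
rewrite /vcg_payment wb !wel AU AiS /Hval Ha Hai HU /= aiu ah.
lra.
Qed.

Lemma pot0 (R : realFieldType) n (M : finType) (own : M -> 'I_n) (C : {set M} -> R)
  (HC0 : C set0 = 0) : potential own C set0 = 0.
Proof.
rewrite potE //; apply: big1 => I _.
by rewrite set0I HC0 mul0r.
Qed.

Theorem theorem5p3 (R : realFieldType) (n : nat) (M : finType) (own : M -> 'I_n)
  (C : {set M} -> R) (H : {set M} -> option R)
  (* C: monotone normalized cost function with values in R_{>=0} *)
  (HC0 : C set0 = 0)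
  (HCnn : forall S : {set M}, 0 <= C S)
  (HCmono : forall S T : {set M}, S \subset T -> C S <= C T)
  (* H: normalized, monotone, values in R_{>=0} \cup {oo} *)
  (HH0 : H set0 = Some 0)
  (HHnn : forall (S : {set M}) h, H S = Some h -> 0 <= h)
  (HHmono : forall S T : {set M}, S \subset T -> ext_le (H S) (H T))
  (* valuation domain D: contains all additive valuation profiles *)
  (D : profile R n M -> Prop)
  (HDvalid : forall v, D v -> valid_profile own v)
  (HDadd : forall v, valid_profile own v -> additive_profile own v -> D v)
  (* the VCG-based mechanism with H (with some tie-breaking) *)
  (alg : profile R n M -> {set M})
  (alg_minus : profile R n M -> 'I_n -> {set M})
  (Halg : forall v, D v -> is_opt own H v (fun _ => True) (alg v))
  (Halg_minus : forall v i, D v ->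
     is_opt own H v (fun T => T :&: part own i = set0) (alg_minus v i))
  (* it always covers the cost on D *)
  (Hcover : forall v, D v ->
     C (alg v) <= \sum_(i < n) vcg_payment own H v i (alg v) (alg_minus v i)) :
  forall S : {set M}, ext_le (Some (potential own C S)) (H S).
Proof.
suff main : forall k (S : {set M}) h, (#|S| <= k)%N -> H S = Some h ->
    potential own C S <= h.
  by move=> S; case HS: (H S) => [h|] //=; exact: (main _ S h (leqnn _) HS).
elim=> [|k IH] S h Sk HS.
  have h0 := HHnn _ _ HS.
  move: Sk; rewrite leqn0 cards_eq0 => /eqP ->.
  by rewrite pot0.
have h0 := HHnn _ _ HS.
have [->|/set0Pn [x xS]] := eqVneq S set0; first by rewrite pot0.
set P := potential own C S.
have n0 : (0 < n)%N := leq_ltn_trans (leq0n _) (ltn_ord (own x)).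
have bound := @mech_bound R n M own C H HCmono HHnn HHmono D HDadd alg alg_minus
  Halg Halg_minus Hcover S h HS.
have rec := @pot_rec _ _ _ own C HC0 S n0.
have Hi : forall i, H (S :\: part own i) = Some (Hval H (S :\: part own i)).
  move=> i; have := HHmono _ _ (subsetDl S (part own i)); rewrite HS /Hval.
  by case: (H _).
have [//|hlt] := lerP P h.
have ti : forall i, potential own C (S :\: part own i) - Hval H (S :\: part own i) <= P - h
   /\ (S :\: part own i != S -> potential own C (S :\: part own i) - Hval H (S :\: part own i) <= 0).
  move=> i.
  have [E|NE] := eqVneq (S :\: part own i) S.
    by rewrite E /Hval HS /=; split.
  have le : potential own C (S :\: part own i) <= Hval H (S :\: part own i).
    apply: (IH _ _ _ (Hi i)).
    have pr : S :\: part own i \proper S by rewrite properEneq NE subsetDl.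
    by rewrite -ltnS (leq_trans (proper_card pr)).
  by split; [lra | move=> _; lra].
have i0ne : S :\: part own (own x) != S.
  apply/eqP => E; have : x \in S :\: part own (own x) by rewrite E.
  by rewrite !inE eqxx.
have sumle : \sum_(i < n) (P - h) <=
    \sum_(i < n) (potential own C (S :\: part own i) - Hval H (S :\: part own i)).
  rewrite !sumrB sumr_const card_ord rec.
  move: bound; rewrite sumrB sumr_const card_ord; lra.
move: sumle; rewrite (bigD1 (own x)) //= [X in _ <= X](bigD1 (own x)) //=.
have t0 := (ti (own x)).2 i0ne.
have rest : \sum_(i < n | i != own x) (potential own C (S :\: part own i) - Hval H (S :\: part own i))
   <= \sum_(i < n | i != own x) (P - h).
  by apply: ler_sum => i _; exact: (ti i).1.
lra.
Qed.
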